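(* Let $k\ge 1$, let $a\in\mathbb{C}$ with $a\neq 0$, let $a_1,\dots,a_k,a_1^*,\dots,a_k^*\in\mathbb{Q}$, and let $\zeta_1,\dots,\zeta_k,\zeta_1^*,\dots,\zeta_k^*$ be roots of unity such that $$\sum_{i=1}^k a_i\zeta_i=a,\qquad \sum_{j=1}^k a_j^*\zeta_j^*=a,$$ and such that $\sum_{i\in I}a_i\zeta_i\neq 0$ for every $I$ with $\emptyset\neq I\subsetneq[k]$ and $\sum_{j\in J}a_j^*\zeta_j^*\neq 0$ for every $J$ with $\emptyset\neq J\subsetneq[k]$. Let $m=\prod_{p\le 2k,\ p\text{ prime}}p$. Then for every $j\in[k]$ there is an $i\in[k]$ such that $(\zeta_j^*/\zeta_i)^m=1$.
   Context: $[k]=\{1,\dots,k\}$. *)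

(* Defs.v *)
From mathcomp Require Import all_boot all_order all_algebra.
Set Implicit Arguments. Unset Strict Implicit. Unset Printing Implicit Defensive.
Import GRing.Theory.
Local Open Scope ring_scope.

Definition is_root_of_unity (C : nzRingType) (z : C) : Prop :=
  exists2 n : nat, (0 < n)%N & (n.-unity_root z).

Definition primorial2 (k : nat) : nat := (\prod_(p < (2 * k).+1 | prime p) p)%N.

(* Main.v *)
Require Import Defs.
From mathcomp Require Import all_boot all_order all_algebra.
From mathcomp Require Import algC cyclotomic cyclic separable.
From mathcomp Require Import zify ring.
Set Implicit Arguments. Unset Strict Implicit. Unset Printing Implicit Defensive.

Definition primorial n := (\prod_(p < n.+1 | prime p) p)%N.

Lemma cop_M (M t : nat) : coprime (1 + M * t) M.
Proof. by rewrite -coprime_modl addnC mulnC modnMDl coprime_modl coprime1n. Qed.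

Lemma cop_case1 p M t : p %| M -> coprime (1 + M * t) (p * M).
Proof.
move=> pM; apply: (@coprime_dvdr _ (M * M)); first by rewrite dvdn_mul.
by rewrite coprimeMr cop_M.
Qed.

Lemma cop_case2 p M t : prime p -> ~~ (p %| 1 + M * t) -> coprime (1 + M * t) (p * M).
Proof. by move=> pp H; rewrite coprimeMr cop_M andbT coprime_sym prime_coprime. Qed.

Lemma bad_unique p M t1 t2 : prime p -> ~~ (p %| M) -> t1 < p -> t2 < p ->
  p %| 1 + M * t1 -> p %| 1 + M * t2 -> t1 = t2.
Proof.
move=> pp pM.
wlog le12 : t1 t2 / t1 <= t2.
  move=> W h1 h2 d1 d2; case: (leqP t1 t2) => [le|/ltnW le]; first exact: W.
  by apply/esym; apply: W.
move=> h1 h2 d1 d2.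
have : p %| M * (t2 - t1) by rewrite mulnBr -(subnDl 1) dvdn_sub.
rewrite Gauss_dvdr ?prime_coprime // => d.
have : t2 - t1 < p by lia.
case: (posnP (t2 - t1)) => [|pos]; first by lia.
by move=> lt; have := dvdn_leq pos d; lia.
Qed.

Lemma count_sub_in (T : eqType) (a b : pred T) s :
  (forall x, x \in s -> a x -> b x) -> count a s <= count b s.
Proof.
elim: s => //= y s IH H; rewrite leq_add //; last first.
  by apply: IH => x xs; apply: H; rewrite inE xs orbT.
by case ay: (a y) => //; rewrite (H y) ?inE ?eqxx.
Qed.

Lemma count_good p M N : prime p -> ~~ (p %| M) -> N = p * M ->
  p.-1 <= size [seq t <- iota 0 p | coprime (1 + M * t) N].
Proof.
move=> pp pM NpM; rewrite size_filter.
set P := fun t => coprime (1 + M * t) N.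
have := count_predC P (iota 0 p); rewrite size_iota => E.
suff : count (predC P) (iota 0 p) <= 1 by lia.
case: (boolP (has (predC P) (iota 0 p))) => [/hasP[t0 t0i bad0] | ]; last first.
  by rewrite has_count -leqNgt => /leq_trans; apply.
have bd t : t \in iota 0 p -> predC P t -> p %| 1 + M * t.
  move=> _ /= ; apply: contraR => H; rewrite /P NpM; exact: cop_case2.
apply: (leq_trans (count_sub_in (b := pred1 t0) _)).
  move=> t ti bt /=; apply/eqP; apply: (bad_unique pp pM).
  - by move: ti; rewrite mem_iota.
  - by move: t0i; rewrite mem_iota.
  - exact: bd.
  - exact: bd.
by rewrite count_uniq_mem ?iota_uniq ?t0i.
Qed.

Lemma dvd_prim N n : 0 < N ->
  (forall p, p \in primes N -> ~~ (p * p %| N) && (p <= n)) -> N %| primorial n.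
Proof.
move=> N0 H; apply/(dvdn_partP _ N0) => p; rewrite mem_primes => /and3P [pp _ pN].
have /andP [npp pn] : ~~ (p * p %| N) && (p <= n) by apply: H; rewrite mem_primes pp N0.
have lg : logn p N = 1.
  have l1 : 0 < logn p N by rewrite logn_gt0 mem_primes pp N0.
  have : ~~ (2 <= logn p N) by rewrite -pfactor_dvdn // expnS expn1.
  lia.
rewrite p_part lg expn1 /primorial.
have lp : p < n.+1 by [].
by rewrite (bigD1 (Ordinal lp)) //= dvdn_mulr.
Qed.

Import Order.TTheory GRing.Theory Num.Theory.
Local Open Scope ring_scope.

Lemma root_prod_has (R : idomainType) (I : Type) (s : seq I) (F : I -> {poly R}) x :
  root (\prod_(i <- s) F i) x = has (fun i => root (F i) x) s.
Proof.
elim: s => [|i s IH]; first by rewrite big_nil rootC oner_eq0.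
by rewrite big_cons rootM IH.
Qed.

Lemma Phi_root_C (C : numClosedFieldType) N (x : C) :
  N.-primitive_root x -> root (map_poly intr 'Phi_N) x.
Proof.
move=> px; have N0 := prim_order_gt0 px.
have mapX (d : nat) : map_poly (intr : int -> C) ('X^d - 1) = 'X^d - 1.
  by rewrite rmorphB /= rmorph1 map_polyXn.
have := prod_Cyclotomic N0.
move/(congr1 (map_poly (intr : int -> C))); rewrite mapX rmorph_prod /= => E.
have : root ('X^N - 1 : {poly C}) x by rewrite rootE !hornerE (prim_expr_order px) subrr.
rewrite -E root_prod_has => /hasP [d]; rewrite -dvdn_divisors // => dN rd.
have d0 : (0 < d)%N by apply: dvdn_gt0 dN.
case: (eqVneq d N) => [<- //|dneN].
have : root ('X^d - 1 : {poly C}) x.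
  rewrite -mapX -(prod_Cyclotomic d0) rmorph_prod /= root_prod_has.
  by apply/hasP; exists d; rewrite // -dvdn_divisors.
rewrite rootE !hornerE subr_eq0 -(prim_order_dvd px) => Nd.
by move: dneN; rewrite eqn_leq (dvdn_leq d0 Nd) (dvdn_leq N0 dN).
Qed.

Lemma root_dvdp (R : fieldType) (p q : {poly R}) x : p %| q -> root p x -> root q x.
Proof. by move/dvdpP=> [r ->] rp; rewrite rootM rp orbT. Qed.

Lemma mapPhiQ (F : numFieldType) N :
  map_poly (ratr : rat -> F) (map_poly intr 'Phi_N) = map_poly intr 'Phi_N.
Proof. by rewrite -map_poly_comp; apply: eq_map_poly => b /=; rewrite rmorph_int. Qed.

Lemma Phi_dvd (C : numClosedFieldType) (q : {poly rat}) N (x : C) :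
  N.-primitive_root x -> root (map_poly ratr q) x -> map_poly intr 'Phi_N %| q.
Proof.
move=> px rq; have N0 := prim_order_gt0 px.
set Phi := map_poly (intr : int -> rat) 'Phi_N.
have PhiM : Phi \is monic by apply: monic_map; exact: Cyclotomic_monic.
have keyK (w : algC) : N.-primitive_root w -> forall r : {poly rat},
    root (map_poly ratr r) w -> Phi %| r.
  move=> pw r; have [pf [Dpf _] dvf] := minCpolyP w.
  suff E : pf = Phi by rewrite dvf E.
  apply: (map_poly_inj (ratr : {rmorphism rat -> algC})).
  by rewrite -Dpf mapPhiQ (minCpoly_cyclotomic pw) (Cintr_Cyclotomic pw).
set g := gcdp Phi q.
have g0 : g != 0 by rewrite gcdp_eq0 negb_and monic_neq0.
have rg : root (map_poly (ratr : rat -> C) g) x.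
  by rewrite gcdp_map root_gcd rq andbT mapPhiQ Phi_root_C.
have sg : (1 < size g)%N.
  rewrite -(size_map_poly (ratr : {rmorphism rat -> C})).
  by apply: root_size_gt1 rg; rewrite map_poly_eq0.
have [z pz] := C_prim_root_exists N0.
have : size (map_poly (ratr : rat -> algC) g) != 1%N.
  by rewrite size_map_poly neq_ltn sg orbT.
move/closed_rootP => [w rw].
have : root (map_poly (ratr : rat -> algC) Phi) w.
  apply: root_dvdp rw; rewrite dvdp_map; exact: dvdp_gcdl.
rewrite mapPhiQ (Cintr_Cyclotomic pz) root_cyclotomic // => pw.
apply: (dvdp_trans (keyK w pw g rw)); exact: dvdp_gcdr.
Qed.

Lemma conj_root (C : numClosedFieldType) (q : {poly rat}) N (x : C) u :
  N.-primitive_root x -> coprime u N -> root (map_poly ratr q) x ->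
  root (map_poly ratr q) (x ^+ u).
Proof.
move=> px cu rq; have := Phi_dvd px rq; rewrite -(dvdp_map (ratr : {rmorphism rat -> C})).
move/root_dvdp; apply; rewrite mapPhiQ; apply: Phi_root_C.
by rewrite prim_root_exp_coprime.
Qed.

Lemma prim_exists (C : numClosedFieldType) n : (0 < n)%N -> exists z : C, n.-primitive_root z.
Proof.
pose p : {poly C} := 'X^n - 1; have [r Dp] := closed_field_poly_normal p.
move=> n_gt0; rewrite (monicP _) ?monicXnsubC // scale1r in Dp.
have rn1: all n.-unity_root r by apply/allP=> z; rewrite -root_prod_XsubC -Dp.
have sz_r: (n < (size r).+1)%N.
  by rewrite -(size_prod_XsubC r id) -Dp size_XnsubC.
have [|z] := hasP (has_prim_root n_gt0 rn1 _ sz_r); last by exists z.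
by rewrite -separable_prod_XsubC -Dp separable_Xn_sub_1 // pnatr_eq0 -lt0n.
Qed.

Lemma classes_vanish (C : numClosedFieldType) (T : finType) (S : {set T})
  (c : T -> rat) (e : T -> nat) N (x : C) p h B (ts : seq nat) :
  N.-primitive_root x -> (p %| N)%N ->
  \sum_(s in S) ratr (c s) * x ^+ e s = 0 ->
  (forall s, s \in S -> (e s + h) %% p < B)%N ->
  uniq ts -> all (fun t => t < p)%N ts ->
  all (fun t => coprime (1 + (N %/ p) * t) N) ts -> (B <= size ts)%N ->
  forall j : nat, \sum_(s in S | ((e s + h) %% p)%N == j) ratr (c s) * x ^+ e s = 0.
Proof.
move=> px pN sum0 fB uts tsp tsc Bts j.
set M := (N %/ p)%N.
set a := fun s => ratr (c s) * x ^+ e s.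
set f := fun s => ((e s + h) %% p)%N.
set G : {poly C} := \sum_(s in S) a s *: 'X^(f s).
have pw : p.-primitive_root (x ^+ M) by apply: dvdn_prim_root.
set w := x ^+ M.
have wp : w ^+ p = 1 by apply: prim_expr_order.
have G0 : G = 0.
  apply/eqP; apply: contraT => G0.
  have sG : (size G <= B)%N.
    apply: leq_trans (size_sum _ _ _) _; apply/bigmax_leqP => s Ss.
    by apply: leq_trans (size_scale_leq _ _) _; rewrite size_polyXn; apply: fB.
  set rs := [seq w ^+ t | t <- ts].
  have urs : uniq rs.
    rewrite map_inj_in_uniq // => t1 t2 t1i t2i /eqP.
    rewrite (eq_prim_root_expr pw) !modn_small ?(allP tsp) //.
    by move/eqP.
  have ars : all (root G) rs.
    apply/allP => y /mapP [t ti ->].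
    set u := (1 + M * t)%N.
    have cu : coprime u N by apply: (allP tsc).
    set Q : {poly rat} := \sum_(s in S) c s *: 'X^(e s).
    have mapQ (y' : C) : (map_poly ratr Q).[y'] = \sum_(s in S) ratr (c s) * y' ^+ e s.
      rewrite /Q raddf_sum horner_sum; apply: eq_bigr => s _.
      by rewrite /= map_polyZ map_polyXn hornerZ hornerXn.
    have rQ : root (map_poly ratr Q) x by rewrite /root mapQ sum0.
    have := conj_root px cu rQ; rewrite /root mapQ => /eqP H.
    rewrite /root /G horner_sum.
    rewrite (eq_bigr (fun s => (w ^+ t) ^+ h * (ratr (c s) * (x ^+ u) ^+ e s))).
      by rewrite -mulr_sumr H mulr0.
    move=> s _; rewrite hornerZ hornerXn /a /f.
    have wt : (w ^+ t) ^+ p = 1 by rewrite -exprM mulnC exprM wp expr1n.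
    have E : x ^+ e s * (w ^+ t) ^+ e s = (x ^+ u) ^+ e s.
      rewrite /w -!exprM -exprD; congr (x ^+ _).
      by rewrite /u mulnDl mul1n mulnA.
    rewrite (expr_mod _ wt) exprD -E; ring.
  have := max_poly_roots G0 ars urs.
  by rewrite size_map ltnNge (leq_trans sG Bts).
have := congr1 (fun q : {poly C} => q`_j) G0.
rewrite coef0 /G coef_sum => E.
transitivity (\sum_(i in S) (a i *: 'X^(f i))`_j); last by rewrite E.
rewrite big_mkcondr /=; apply: eq_bigr => s _.
by rewrite coefZ coefXn eq_sym; case: eqP => _; rewrite ?mulr1 ?mulr0.
Qed.

Lemma mann (C : numClosedFieldType) (T : finType) (c : T -> rat) N :
  (0 < N)%N -> forall (S : {set T}) (w : T -> C),
  (forall s, s \in S -> w s ^+ N = 1) ->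
  \sum_(s in S) ratr (c s) * w s = 0 ->
  (forall S' : {set T}, S' \subset S -> S' != set0 -> S' != S ->
     \sum_(s in S') ratr (c s) * w s != 0) ->
  forall s t, s \in S -> t \in S -> (w s / w t) ^+ primorial #|S| = 1.
Proof.
elim/ltn_ind: N => N IH N0 S w wN sum0 hmin s t Ss St.
have wne (r : T) : r \in S -> w r != 0.
  move=> rS; apply/eqP => w0; move: (wN r rS); rewrite w0 expr0n gtn_eqF //.
  by move/eqP; rewrite eq_sym oner_eq0.
have [x px] := prim_exists C N0.
case: (boolP (has (fun p => (p * p %| N) || (#|S| < p))%N (primes N)))
  => [/hasP [p pP cond] | nh]; last first.
  have dv : (N %| primorial #|S|)%N.
    apply: (dvd_prim N0) => p pP; move/hasPn: nh => /(_ p pP).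
    by rewrite negb_or -leqNgt.
  have [L ->] := dvdnP dv.
  by rewrite mulnC exprM exprMn exprVn !wN // invr1 mulr1 expr1n.
move: pP; rewrite mem_primes => /and3P [pp _ pN].
set M := (N %/ p)%N.
have NpM : N = (p * M)%N by rewrite /M mulnC divnK.
have M0 : (0 < M)%N by move: N0; rewrite NpM muln_gt0 => /andP[].
pose e r := if [pick i : 'I_N | w r == x ^+ i] is Some i then val i else 0%N.
have we r : r \in S -> w r = x ^+ e r.
  move=> rS; rewrite /e; case: pickP => [i /eqP //|H].
  by have [i wi] := prim_rootP px (wN r rS); move: (H i); rewrite wi eqxx.
have sum0' : \sum_(r in S) ratr (c r) * x ^+ e r = 0.
  by rewrite -[RHS]sum0; apply: eq_bigr => r rS; rewrite we.
have key : exists h B (ts : seq nat),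
   [/\ forall r, r \in S -> ((e r + h) %% p < B)%N, uniq ts,
       all (fun t => t < p)%N ts,
       all (fun t => coprime (1 + (N %/ p) * t) N) ts & (B <= size ts)%N].
  case: (boolP (p %| M))%N => pM.
    exists 0%N, p, (iota 0 p); split.
    - by move=> r _; rewrite ltn_pmod // prime_gt0.
    - exact: iota_uniq.
    - by apply/allP => t'; rewrite mem_iota.
    - by apply/allP => t' _; rewrite -/M NpM; apply: cop_case1.
    - by rewrite size_iota.
  have Sp : (#|S| < p)%N.
    move: cond; case/orP => // ppN; exfalso.
    by move: ppN; rewrite NpM dvdn_pmul2l ?prime_gt0 // (negbTE pM).
  have p0 : (0 < p)%N by apply: prime_gt0.
  set Im := [set (Ordinal (ltn_pmod (e r) p0)) | r in S].
  have : ~~ ([set: 'I_p] \subset Im).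
    apply/negP => /subset_leq_card; rewrite cardsT card_ord leqNgt.
    by rewrite (leq_ltn_trans (leq_imset_card _ _) Sp).
  case/subsetPn => rho _ rhoIm.
  have nr r : r \in S -> (e r %% p)%N != rho.
    move=> rS; apply/negP => /eqP E; move: rhoIm; apply/negP; rewrite negbK.
    apply/imsetP; exists r => //; apply: val_inj => /=; by rewrite E.
  exists (p.-1 - rho)%N, p.-1, [seq t <- iota 0 p | coprime (1 + M * t) N]; split.
  - move=> r rS.
    have lt := ltn_pmod (e r + (p.-1 - rho)) p0.
    suff : ((e r + (p.-1 - rho)) %% p)%N != p.-1 by lia.
    apply/negP => /eqP E.
    have rp := ltn_ord rho.
    have E2 : (e r + (p.-1 - rho) == rho + (p.-1 - rho) %[mod p])%N.
      by rewrite E modn_small; lia.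
    move: E2; rewrite eqn_modDr (modn_small rp) => E3.
    by move: (nr r rS); rewrite (eqP E3) eqxx.
  - by rewrite filter_uniq // iota_uniq.
  - by apply/allP => t'; rewrite mem_filter mem_iota => /and3P[].
  - by apply/allP => t'; rewrite mem_filter => /andP[].
  - exact: count_good.
have [h [B [ts [fB uts tsp tsc Bts]]]] := key.
have cv := classes_vanish px pN sum0' fB uts tsp tsc Bts.
have cong r : r \in S -> (e r == e s %[mod p])%N.
  move=> rS; set j := ((e s + h) %% p)%N.
  set S' := [set r' in S | ((e r' + h) %% p)%N == j].
  have S'S : S' = S.
    apply/eqP; apply: contraT => ne.
    have := hmin S' _ _ ne.
    have -> : \sum_(r' in S') ratr (c r') * w r' =
              \sum_(r' in S | ((e r' + h) %% p)%N == j) ratr (c r') * x ^+ e r'.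
      rewrite (eq_bigl (fun r' => (r' \in S) && (((e r' + h) %% p)%N == j))).
        by apply: eq_bigr => r' /andP[r'S _]; rewrite we.
      by move=> r'; rewrite inE.
    rewrite cv eqxx; apply.
    - by apply/subsetP => r'; rewrite inE => /andP[].
    - by apply/set0Pn; exists s; rewrite inE Ss eqxx.
  have : r \in S' by rewrite S'S.
  by rewrite inE rS /= => /eqP E; rewrite -(eqn_modDr h); apply/eqP.
have rootM r : r \in S -> (w r / w s) ^+ M = 1.
  move=> rS; rewrite !we // exprMn exprVn -!exprM.
  have -> : x ^+ (e r * M) = x ^+ (e s * M).
    apply/eqP; rewrite (eq_prim_root_expr px) NpM.
    by rewrite -!muln_modl (eqP (cong r rS)).
  rewrite divff // expf_neq0 // (prim_root_eq0 px) -lt0n //.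
pose w' r := w r / w s.
have Mlt : (M < N)%N by rewrite /M ltn_Pdiv // prime_gt1.
have sumw' (S' : {set T}) : \sum_(r in S') ratr (c r) * w' r =
                            (\sum_(r in S') ratr (c r) * w r) / w s.
  by rewrite mulr_suml; apply: eq_bigr => r _; rewrite /w' mulrA.
have := IH M Mlt M0 S w' rootM _ _ s t Ss St.
have -> : w' s / w' t = w s / w t.
  rewrite /w'; have := wne s Ss; have := wne t St => h1 h2; field.
  by rewrite h1 h2.
apply.
- by rewrite sumw' sum0 mul0r.
- move=> S' sub ne0 neS; rewrite sumw' mulf_neq0 ?invr_neq0 ?wne //.
  exact: hmin.
Qed.

Lemma primorial_dvd n n' : (n <= n')%N -> (primorial n %| primorial n')%N.
Proof.
move=> le; rewrite /primorial (@big_ord_widen_cond _ _ _ n.+1 n'.+1 prime id) //.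
by rewrite [X in (_ %| X)%N](bigID (fun i : 'I_n'.+1 => (i < n.+1)%N)) /= dvdn_mulr.
Qed.

Lemma common_order (C : numClosedFieldType) (T : finType) (w : T -> C) :
  (forall t, is_root_of_unity (w t)) -> exists2 N, (0 < N)%N & forall t, w t ^+ N = 1.
Proof.
move=> H.
suff [N N0 HN] : exists2 N, (0 < N)%N & forall t, t \in enum T -> w t ^+ N = 1.
  by exists N => // t; apply: HN; rewrite mem_enum.
elim: (enum T) => [|t0 s [N N0 HN]]; first by exists 1%N.
have [n n0 /unity_rootP wn] := H t0.
exists (n * N)%N; first by rewrite muln_gt0 n0.
move=> t; rewrite inE => /orP [/eqP ->| ts]; first by rewrite exprM wn expr1n.
by rewrite mulnC exprM HN // expr1n.
Qed.


Unset Implicit Arguments.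
Theorem theorem6 (C : numClosedFieldType) (k : nat) (hk : (1 <= k)%N)
  (a : C) (ha : a != 0)
  (as_ bs : 'I_k -> rat) (z zs : 'I_k -> C)
  (hz : forall i, is_root_of_unity (z i))
  (hzs : forall j, is_root_of_unity (zs j))
  (hsum : \sum_(i < k) ratr (as_ i) * z i = a)
  (hsums : \sum_(j < k) ratr (bs j) * zs j = a)
  (hmin : forall I : {set 'I_k}, I != set0 -> I != setT ->
            \sum_(i in I) ratr (as_ i) * z i != 0)
  (hmins : forall J : {set 'I_k}, J != set0 -> J != setT ->
            \sum_(j in J) ratr (bs j) * zs j != 0) :
  forall j : 'I_k, exists i : 'I_k, (zs j / z i) ^+ primorial2 k = 1.
Proof.
move=> j.
pose T := ('I_k + 'I_k)%type.
pose c (t : T) := match t with inl i => as_ i | inr j => - bs j end.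
pose w (t : T) := match t with inl i => z i | inr j => zs j end.
pose F (t : T) := ratr (c t) * w t.
have split (S : {set T}) : \sum_(t in S) F t =
    \sum_(i | inl i \in S) ratr (as_ i) * z i - \sum_(j | inr j \in S) ratr (bs j) * zs j.
  rewrite big_sumType /= -sumrN; congr (_ + _); apply: eq_bigr => i _.
  by rewrite /F /= rmorphN mulNr.
have [N N0 wN] : exists2 N, (0 < N)%N & forall t, w t ^+ N = 1.
  by apply: common_order => -[i|i] /=.
pose P (S : {set T}) := (inr j \in S) && (\sum_(t in S) F t == 0).
have PT : P setT.
  rewrite /P inE /= split.
  rewrite (eq_bigl (fun _ => true)) => [|i]; last by rewrite inE.
  rewrite [X in _ - X](eq_bigl (fun _ => true)) => [|i]; last by rewrite inE.
  by rewrite hsum hsums subrr.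
case: (arg_minnP (fun S : {set T} => #|S|) PT) => S /andP [jS sum0] Smin.
have minS (S' : {set T}) : S' \subset S -> S' != set0 -> S' != S ->
    \sum_(t in S') F t != 0.
  move=> sub ne0 neS; apply/negP => /eqP s0.
  case jS' : (inr j \in S').
    have := Smin S'; rewrite /P jS' s0 eqxx => /(_ isT).
    by rewrite leqNgt proper_card // properEneq neS sub.
  have PD : P (S :\: S').
    rewrite /P !inE jS' jS /=.
    by move: sum0; rewrite (big_setID S') /= (setIidPr sub) s0 add0r.
  have := Smin _ PD; rewrite cardsDS //.
  have : (0 < #|S'|)%N by rewrite card_gt0.
  have : (#|S'| <= #|S|)%N by apply: subset_leq_card.
  lia.
have [i iS] : exists i, inl i \in S.
  apply/existsP; apply: contraT; rewrite negb_exists => /forallP allr.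
  pose J := [set j' | inr j' \in S].
  have sJ : \sum_(t in S) F t = - \sum_(j' in J) ratr (bs j') * zs j'.
    rewrite split big1 ?add0r => [|i' iS']; last by move: (allr i'); rewrite iS'.
    by congr (- _); apply: eq_bigl => j'; rewrite inE.
  suff : \sum_(j' in J) ratr (bs j') * zs j' != 0.
    by move: sum0; rewrite sJ oppr_eq0 => /eqP ->; rewrite eqxx.
  have J0 : J != set0 by apply/set0Pn; exists j; rewrite inE.
  case: (eqVneq J setT) => [JT|JT]; last by apply: hmins.
  rewrite JT (eq_bigl (fun _ => true)) => [|j']; last by rewrite inE.
  by rewrite hsums.
exists i.
have := mann N0 (w := w) (c := c) (fun t _ => wN t) (eqP sum0) minS jS iS.
rewrite /= => H.
have : (primorial #|S| %| primorial2 k)%N.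
  apply: primorial_dvd; apply: leq_trans (max_card _) _.
  by rewrite card_sum card_ord addnn -mul2n.
case/dvdnP => L ->.
by rewrite mulnC exprM H expr1n.
Qed.
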